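(* Assume $2\pi/N\le\underline w$. There exists $C>0$ (independent of $\epsilon$) such that for every $\epsilon\in(0,\tfrac12]$ there exists a ReLU FNO $\mathcal{N}^{\mathrm{FNO}}$ on the grid of size $N$, with constant (in $x$) output, $k_{\max}=0$, $d_v\le C$ and depth $\le C\log(\epsilon^{-1})^2$, such that \[ \sup_{h,w,\xi}\big|\mathcal{N}^{\mathrm{FNO}}(\bar u)(x)-h\big|\le\epsilon\quad\text{for all }x, \] where $\bar u=h\,1_{[-w/2,w/2]}(\cdot-\xi)$ and the supremum is over $h\in[\underline h,\overline h]$, $w\in[\underline w,\overline w]$, $\xi\in[0,2\pi]$.
   Context: $\mathbb{T}=\mathbb{R}/2\pi\mathbb{Z}$; fixed $0<\underline h\le\overline h$, $0<\underline w\le\overline w<2\pi$; $1_{[-w/2,w/2]}$ periodized. FNO with grid size $N$: $x_j=2\pi j/N$, $\mathcal{F}_Nv(k)=\frac1N\sum_{j=1}^Nv(x_j)e^{-ikx_j}$; an FNO with lifting dimension $d_v$, cut-off $k_{\max}$, depth $L$, ReLU $\sigma$ is $Q\circ\mathcal{L}_L\circ\dots\circ\mathcal{L}_1\circ R$, $(R\bar u)(x)=R(\bar u(x),x)$ ($R$ a shallow ReLU network into $\mathbb{R}^{d_v}$), $(\mathcal{L}_\ell v)(x)=\sigma(W_\ell v(x)+b_\ell(x)+\sum_{|k|\le k_{\max}}P_\ell(k)\mathcal{F}_Nv(k)e^{ikx})$ with $W_\ell\in\mathbb{R}^{d_v\times d_v}$, $P_\ell(k)\in\mathbb{C}^{d_v\times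 d_v}$, real bias $b_\ell(x)=\sum_{|k|\le k_{\max}}\hat b_\ell(k)e^{ikx}$, $Q$ linear pointwise. Depth $=L$. *)

(* Defs.v *)
From mathcomp Require Import all_boot all_order all_algebra all_classical all_reals all_analysis.
From mathcomp Require Import complex.
From Stdlib Require List.
Set Implicit Arguments. Unset Strict Implicit. Unset Printing Implicit Defensive.
Import Order.TTheory GRing.Theory Num.Theory.
Local Open Scope ring_scope.

Section FNO.
Variable R : realType.

Definition relu (x : R) : R := Num.max x 0.
Definition relu_v n (v : 'cV[R]_n) : 'cV[R]_n := map_mx relu v.

Definition cR (x : R) : R[i] := Complex x 0.
Definition cRv n (v : 'cV[R]_n) : 'cV[R[i]]_n := map_mx cR v.
Definition reV n (v : 'cV[R[i]]_n) : 'cV[R]_n := map_mx (fun z : R[i] => complex.Re z) v.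

Definition cexp (k : int) (x : R) : R[i] :=
  Complex (cos (k%:~R * x)) (sin (k%:~R * x)).

(** grid points x_j = 2 pi j / N, j = 1..N (j : 'I_N stands for j+1) *)
Definition gridpt (N : nat) (j : 'I_N) : R := 2 * pi * (j.+1)%:R / N%:R.

Definition dft (N dv : nat) (v : R -> 'cV[R]_dv) (k : int) : 'cV[R[i]]_dv :=
  (cR (N%:R)^-1) *: \sum_(j < N) (cexp (- k) (gridpt j) *: cRv (v (gridpt j))).

(** the integers k with |k| <= K, enumerated as i - K for i < 2K+1 *)
Definition fidx (K : nat) (i : 'I_(2 * K).+1) : int := (i : int) - (K : int).

Record Lifting (dv : nat) := {
  lift_width : nat;
  lift_A1 : 'M[R]_(lift_width, 2);
  lift_c1 : 'cV[R]_lift_width;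
  lift_A2 : 'M[R]_(dv, lift_width);
  lift_c2 : 'cV[R]_dv }.

Definition lift_eval dv (L : Lifting dv) (y x : R) : 'cV[R]_dv :=
  lift_A2 L *m relu_v (lift_A1 L *m (\col_(i < 2) (if i == 0 :> nat then y else x))
                        + lift_c1 L) + lift_c2 L.

(** Fourier layer: W, P(k) (complex matrices), bias coefficients \hat b(k) *)
Record FLayer (dv : nat) := {
  lay_W : 'M[R]_dv;
  lay_P : int -> 'M[R[i]]_dv;
  lay_bh : int -> 'cV[R[i]]_dv }.

(** The bias and the spectral term are real under the Hermitian symmetry
   imposed in [fno_valid]; Re only casts them to real vectors. *)
Definition layer_eval (N K dv : nat) (l : FLayer dv) (v : R -> 'cV[R]_dv) (x : R)
  : 'cV[R]_dv :=
  relu_v (lay_W l *m v x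
          + reV (\sum_(i < (2 * K).+1) (cexp (fidx i) x *: lay_bh l (fidx i)))
          + reV (\sum_(i < (2 * K).+1)
                   (cexp (fidx i) x *: (lay_P l (fidx i) *m dft N v (fidx i))))).

Record FNO := {
  fno_dv : nat;
  fno_kmax : nat;
  fno_lift : Lifting fno_dv;
  fno_layers : seq (FLayer fno_dv);
  fno_Q : 'M[R]_(1, fno_dv) }.

Definition fno_depth (F : FNO) : nat := size (fno_layers F).

(** realness (Hermitian symmetry) of P_l(k) and \hat b_l(k) for |k| <= kmax *)
Definition fno_valid (F : FNO) : Prop :=
  forall l, Stdlib.Lists.List.In l (fno_layers F) -> forall i : 'I_(2 * fno_kmax F).+1,
    lay_P l (- fidx i) = map_mx conjc (lay_P l (fidx i)) /\
    lay_bh l (- fidx i) = map_mx conjc (lay_bh l (fidx i)).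

Definition fno_eval (N : nat) (F : FNO) (u : R -> R) : R -> R :=
  fun x =>
    (fno_Q F *m
      (foldl (fun v l => layer_eval N (fno_kmax F) l v)
             (fun y => lift_eval (fno_lift F) (u y) y) (fno_layers F)) x) 0 0.

Definition pbox (h w xi : R) (x : R) : R :=
  if `[< exists m : int, `|x - xi - 2 * pi * m%:~R| <= w / 2 >] then h else 0.

End FNO.

(* Main.v *)
Require Import Defs.
From mathcomp Require Import all_boot all_order all_algebra all_classical all_reals all_analysis.
From mathcomp Require Import complex.
From mathcomp Require Import ring lra zify.
From Stdlib Require Import Lia.
Import Order.TTheory GRing.Theory Num.Theory.
Local Open Scope ring_scope.


Section S1.
Variable R : realType.

Lemma cRE : (@cR R) = real_complex R.
Proof. by apply/funext. Qed.

Lemma cexp0 (x : R) : cexp 0%R x = 1.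
Proof. by rewrite /cexp mul0r cos0 sin0. Qed.

Lemma reV_cRv n (v : 'cV[R]_n) : reV (cRv v) = v.
Proof. by apply/matrixP=> i j; rewrite !mxE. Qed.

Lemma fidx0 (i : 'I_(2 * 0).+1) : fidx i = 0.
Proof. by rewrite (ord1 i) /fidx. Qed.

Lemma cR_mul dv n (Pm : 'M[R]_dv) (c : R) (w : 'I_n -> 'cV[R]_dv) :
  map_mx (@cR R) Pm *m (cR c *: \sum_(j < n) cRv (w j)) = cRv (Pm *m (c *: \sum_(j < n) w j)).
Proof.
rewrite /cRv cRE map_mxM map_mxZ; congr (_ *m (_ *: _)).
by rewrite (map_mx_sum (real_complex R)).
Qed.

Lemma layer_simpl (N dv : nat) (Pm : 'M[R]_dv) (b : 'cV[R]_dv) (v : R -> 'cV[R]_dv) x :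
  layer_eval N 0 (Build_FLayer 0 (fun _ => map_mx (@cR R) Pm) (fun _ => cRv b)) v x =
  relu_v (b + Pm *m (N%:R^-1 *: \sum_(j < N) v (gridpt R j))).
Proof.
rewrite /layer_eval /= !big_ord1 fidx0 cexp0 !scale1r mul0mx add0r.
rewrite /dft oppr0.
rewrite (eq_bigr (fun j => cRv (v (gridpt R j)))); last by move=> j _; rewrite cexp0 scale1r.
by rewrite reV_cRv cR_mul reV_cRv.
Qed.
End S1.


Section S2.
Variable R : realType.

Lemma relu_ge0 (x : R) : 0 <= x -> relu x = x.
Proof. by move=> h; rewrite /relu max_l. Qed.
Lemma relu_le0 (x : R) : x <= 0 -> relu x = 0.
Proof. by move=> h; rewrite /relu max_r. Qed.

Lemma step_lemma (A : nat -> R) h hlo hhi :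
 0 < hlo -> hlo <= h -> h <= hhi -> (forall i, A i = 0 \/ A i = h) ->
 forall n, (\sum_(i<n) A i = 0 /\ \sum_(j<n) relu (A j - hhi/hlo * \sum_(i<j) A i) = 0) \/
           (h <= \sum_(i<n) A i /\ \sum_(j<n) relu (A j - hhi/hlo * \sum_(i<j) A i) = h).
Proof.
move=> hlo0 hloh hhhi HA; elim=> [|n IH]; first by left; rewrite !big_ord0.
rewrite !big_ord_recr /=.
case: IH => [[T0 S0]|[Th Sh]].
- rewrite T0 S0 mulr0 subr0 !add0r relu_ge0; last by case: (HA n)=> ->; lra.
  by case: (HA n) => ->; [left | right]; split; lra.
- right; split.
  + by case: (HA n) => ->; lra.
  + set T := \sum_(i < n) A i in Th *.
    rewrite Sh relu_le0 ?addr0 //.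
    have H1: hhi / hlo * hlo = hhi by rewrite divfK // gt_eqF.
    have H2: 0 <= hhi / hlo * (T - hlo) by apply: mulr_ge0; [apply: divr_ge0; lra | lra].
    rewrite mulrBr H1 in H2. by case: (HA n) => ->; lra.
Qed.

Lemma grid_hit (N : nat) (w xi : R) : (0 < N)%N -> 0 <= xi <= 2 * pi ->
  2 * pi / N%:R <= w -> w < 2 * pi ->
  exists2 k, (k < N)%N & exists m : int, `|2 * pi * (k.+1)%:R / N%:R - xi - 2 * pi * m%:~R| <= w / 2.
Proof.
move=> N0 /andP[xi0 xi2] Dw w2.
have Np : (0 : R) < N%:R by rewrite ltr0n.
have pi0 : (0:R) < pi := pi_gt0 R.
set D : R := 2 * pi / N%:R.
have D0 : 0 < D by rewrite /D divr_gt0 // mulr_gt0.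
have ND : D * N%:R = 2 * pi by rewrite /D divfK // gt_eqF.
have ND2 : N%:R * D = 2 * pi by rewrite mulrC.
have DwD : D <= w by [].
have ppi : D * N%:R / 2 = pi by rewrite ND; lra.
have I1 : ((1:int)%:~R : R) = 1 by [].
have xgE : forall k : nat, 2 * pi * k%:R / N%:R = k%:R * D.
  by move=> k; rewrite /D mulrAC mulrC.
have [t [t1 t2]] : exists t : int, (xi - w / 2) / D <= t%:~R /\ (t - 1)%:~R < (xi - w / 2) / D.
  by exists (Num.ceil ((xi - w / 2) / D)); split; [exact: ceil_ge | exact: ceilB1_lt].
rewrite intrB /= in t2.
have e1 : xi - w / 2 <= t%:~R * D by rewrite -ler_pdivrMr.
have e2 : (t%:~R - 1) * D < xi - w / 2 by rewrite -ltr_pdivlMr.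
rewrite mulrBl mul1r in e2.
case Ht: t => [n|n].
- case: n Ht => [|k] Ht.
  + have tE : (t%:~R : R) = 0 by rewrite Ht.
    rewrite tE mul0r in e1 e2.
    exists N.-1; first by rewrite prednK.
    exists 1; rewrite prednK // xgE ND2 I1 mulr1.
    rewrite ler_norml; apply/andP; split; lra.
  + have tE : (t%:~R : R) = k.+1%:R by rewrite Ht.
    rewrite tE in e1 e2.
    exists k.
    * have : (k.+1%:R : R) * D < (N%:R + 1) * D by rewrite mulrDl mul1r ND2; lra.
      by rewrite ltr_pM2r // natr1 ltr_nat ltnS.
    * exists 0; rewrite mulr0 subr0 xgE.
      rewrite ler_norml; apply/andP; split; lra.
- have tE : (t%:~R : R) = - n.+1%:R by rewrite Ht NegzE mulrNz.
  rewrite tE mulNr in e1 e2.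
  have hn : (n.+1%:R : R) * D < D * N%:R / 2 by rewrite ND; lra.
  have hn2 : (n.+2 <= N)%N.
    have : ((n.+1 * 2)%:R : R) < N%:R.
      rewrite natrM -(ltr_pM2r D0) mulrAC.
      have H2 : (0:R) < 2 by lra.
      rewrite -(ltr_pM2r H2) in hn.
      move: hn; rewrite (mulrC D) divfK ?pnatr_eq0 //; lra.
    rewrite ltr_nat; lia.
  exists (N - n.+2)%N; first lia.
  exists 1; rewrite xgE I1 mulr1 -ND2.
  have -> : ((N - n.+2).+1%:R : R) = N%:R - (n.+1)%:R.
    rewrite -natrB; last lia. congr (_%:R); lia.
  rewrite ler_norml; apply/andP; split; lra.
Qed.
End S2.


Section S4.
Variable R : realType.
Variables (N : nat) (hlo hhi : R).

Definition Kc : R := N%:R * hhi.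
Definition pk (k : nat) : R := 2 * pi * k%:R / N%:R.
Definition Gf (u : R -> R) (k : nat) : R :=
  \sum_(i < N) relu (u (gridpt R i) - Kc * (gridpt R i - pk k)).
Definition Tf (u : R -> R) (k : nat) : R :=
  \sum_(i < N) (if (i < k)%N then u (gridpt R i) else 0).

Lemma G_shift (u : R -> R) (k : nat) : (0 < N)%N -> 0 < hhi ->
  (forall i : 'I_N, 0 <= u (gridpt R i) <= hhi) ->
  Gf u k = Tf u k + Gf (fun _ => 0) k.
Proof.
move=> N0 h0 Hu; rewrite /Gf /Tf -big_split; apply: eq_bigr => i _ /=.
have Np : (N%:R : R) != 0 by rewrite pnatr_eq0 -lt0n.
have pi2 : (2 : R) <= pi := pi_ge2 R.
have hX : Kc * (gridpt R i - pk k) = 2 * pi * hhi * ((i.+1)%:R - k%:R).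
  by rewrite /Kc /gridpt /pk; field.
rewrite hX; move: (Hu i) => /andP[a0 a1].
set a := u (gridpt R i) in a0 a1 *.
set c := (i.+1)%:R - k%:R.
have P0 : 0 <= 2 * pi * hhi by rewrite !mulr_ge0 //; lra.
case: ltnP => ik.
- have c0 : c <= 0 by rewrite /c subr_le0 ler_nat.
  have : 2 * pi * hhi * c <= 0 by apply: mulr_ge0_le0.
  move=> H; rewrite !relu_ge0; lra.
- have c1 : 1 <= c by rewrite /c lerBrDl natr1 ler_nat ltnS.
  have H1 : 2 * pi * hhi <= 2 * pi * hhi * c by apply: ler_peMr.
  have H2 : hhi <= 2 * pi * hhi.
    by apply: ler_peMl; lra.
  rewrite !relu_le0; lra.
Qed.


Definition Mc : R := hhi / hlo.

Definition myA1 : 'M[R]_(N.+1, 2) :=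
  \matrix_(i < N.+1, c < 2) (if c == 0 :> nat then 1 else - Kc).
Definition myc1 : 'cV[R]_N.+1 := \col_(i < N.+1) (Kc * pk i).

Definition myLift : Lifting R N.+1 :=
  {| lift_width := N.+1; lift_A1 := myA1; lift_c1 := myc1; lift_A2 := 1%:M; lift_c2 := 0 |}.

Lemma lift_entry y x (k : 'I_N.+1) :
  lift_eval myLift y x k 0 = relu (y - Kc * (x - pk k)).
Proof.
rewrite /lift_eval /= mul1mx addr0 /relu_v !mxE big_ord_recr big_ord1 /= !mxE /=.
by congr relu; ring.
Qed.

Definition myPm : 'M[R]_N.+1 := \matrix_(j < N.+1, k < N.+1)
  (if (j < N)%N then N%:R * ((k == j.+1 :> nat)%:R - (1 + Mc) * (k == j :> nat)%:R) else 0).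
Definition mybv : 'cV[R]_N.+1 := \col_(j < N.+1)
  (if (j < N)%N then - (Gf (fun _ => 0) j.+1 - (1 + Mc) * Gf (fun _ => 0) j) else 0).

Definition myLayer : FLayer R N.+1 :=
  {| lay_W := 0; lay_P := fun _ => map_mx (@cR R) myPm; lay_bh := fun _ => cRv mybv |}.

Definition myFNO : FNO R :=
  {| fno_dv := N.+1; fno_kmax := 0; fno_lift := myLift; fno_layers := [:: myLayer];
     fno_Q := const_mx 1 |}.

Lemma eval_formula u x : fno_eval N myFNO u x =
  \sum_(j < N.+1) relu ((mybv + myPm *m (N%:R^-1 *:
      \sum_(i < N) lift_eval myLift (u (gridpt R i)) (gridpt R i))) j 0).
Proof.
rewrite /fno_eval /= layer_simpl !mxE; apply: eq_bigr => j _; by rewrite !mxE mul1r.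
Qed.

Lemma sum_delta n t (f : nat -> R) : (t < n)%N ->
  \sum_(k < n) (k == t :> nat)%:R * f k = f t.
Proof.
move=> tn; rewrite (bigD1 (Ordinal tn)) //= eqxx mul1r big1 ?addr0 // => k.
by rewrite -val_eqE /= => /negbTE ->; rewrite mul0r.
Qed.

Lemma pre_entry u (j : 'I_N.+1) : (0 < N)%N ->
  (mybv + myPm *m (N%:R^-1 *: \sum_(i < N) lift_eval myLift (u (gridpt R i)) (gridpt R i))) j 0
  = if (j < N)%N then (Gf u j.+1 - Gf (fun _ => 0) j.+1)
                     - (1 + Mc) * (Gf u j - Gf (fun _ => 0) j) else 0.
Proof.
move=> N0.
have Np : (N%:R : R) != 0 by rewrite pnatr_eq0 -lt0n.
rewrite !mxE.
have mE : forall k : 'I_N.+1, (N%:R^-1 *: \sum_(i < N) lift_eval myLift (u (gridpt R i)) (gridpt R i)) k 0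
   = N%:R^-1 * Gf u k.
  move=> k; rewrite !mxE summxE /Gf; congr (_ * _); apply: eq_bigr => i _.
  by rewrite lift_entry.
under eq_bigr do rewrite mE.
case: ifP => jN; last first.
  by rewrite add0r big1 // => k _; rewrite !mxE jN mul0r.
rewrite (eq_bigr (fun k : 'I_N.+1 => (k == j.+1 :> nat)%:R * Gf u k
   - (1 + Mc) * ((k == j :> nat)%:R * Gf u k))); last first.
  by move=> k _; rewrite !mxE jN; field.
rewrite sumrB -mulr_sumr (@sum_delta _ j.+1 (Gf u)); last by rewrite ltnS.
rewrite (@sum_delta _ j (Gf u)) //.
ring.
Qed.

End S4.


Lemma ln_part (R : realType) (n : nat) (eps : R) : 0 < eps -> eps <= 1 / 2 ->
  1 <= (n%:R + (ln (2:R))^-2) * (ln (eps^-1)) ^+ 2.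
Proof.
move=> e0 e2.
have l2 : 0 < ln (2:R) by apply: ln_gt0; lra.
have ei : 2 <= 1 / eps by rewrite ler_pdivlMr //; lra.
rewrite div1r in ei.
have L : ln 2 <= ln (eps^-1) by rewrite ler_ln // posrE; lra.
set Lg := ln (eps^-1) in L *.
have h1 : 0 <= n%:R * Lg ^+ 2 by rewrite mulr_ge0 // exprn_ge0 //; lra.
have h2 : 1 <= (ln (2:R))^-2 * Lg ^+ 2.
  have -> : (ln (2:R))^-2 * Lg ^+ 2 = (Lg / ln 2) ^+ 2 by rewrite exprMn exprVn mulrC.
  apply: exprn_ege1; rewrite ler_pdivlMr // mul1r //.
rewrite mulrDl; lra.
Qed.

Theorem mainTheorem14 (R : realType) (N : nat) (hlo hhi wlo whi : R) :
  (0 < N)%N ->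
  0 < hlo -> hlo <= hhi -> 0 < wlo -> wlo <= whi -> whi < 2 * pi ->
  2 * pi / N%:R <= wlo ->
  exists C : R, 0 < C /\
    forall eps : R, 0 < eps -> eps <= 1 / 2 ->
      exists F : FNO R,
        fno_valid F /\ fno_kmax F = 0%N /\
        (fno_dv F)%:R <= C /\
        (fno_depth F)%:R <= C * (ln (eps^-1)) ^+ 2 /\
        (forall (u : R -> R) (x y : R), 0 < x <= 2 * pi -> 0 < y <= 2 * pi ->
           fno_eval N F u x = fno_eval N F u y) /\
        (forall h w xi : R, hlo <= h <= hhi -> wlo <= w <= whi -> 0 <= xi <= 2 * pi ->
           forall x : R, 0 < x <= 2 * pi ->
             `|fno_eval N F (pbox h w xi) x - h| <= eps).
Proof.
move=> N0 hlo0 hlohhi wlo0 wlowhi whi2 Dwlo.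
have l2 : 0 < ln (2:R) by apply: ln_gt0; lra.
have c0 : 0 <= (ln (2:R))^-2 by rewrite invr_ge0 exprn_ge0 // ltW.
have n0 : (0:R) < (N.+1)%:R by rewrite ltr0Sn.
exists ((N.+1)%:R + (ln (2:R))^-2); split; first lra.
move=> eps e0 e2.
exists (myFNO R N hlo hhi).
split.
  rewrite /fno_valid /= => l [<-|[]] i; split; apply/matrixP=> a c.
    by rewrite !mxE /cR /= oppr0.
  by rewrite /cRv !mxE /cR /= oppr0.
split; first by [].
split; first by rewrite /= lerDl.
split; first by rewrite /fno_depth /=; exact: ln_part.
split; first by move=> u x y _ _; rewrite !eval_formula.
move=> h w xi /andP[h1 h2] /andP[w1 w2] xiR x _.
set u := pbox h w xi.
set A := fun i : nat => u (2 * pi * (i.+1)%:R / N%:R).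
have hb : forall i : 'I_N, 0 <= u (gridpt R i) <= hhi.
  by move=> i; rewrite /u /pbox; case: ifP => _; apply/andP; split; lra.
have hA : forall i : nat, A i = 0 \/ A i = h.
  by move=> i; rewrite /A /u /pbox; case: ifP => _; [right|left].
have TfE : forall k, (k <= N)%N -> Tf R N u k = \sum_(i < k) A i.
  move=> k kN; rewrite /Tf (big_ord_widen _ (fun i => A i) kN).
  by rewrite [RHS]big_mkcond; apply: eq_bigr.
have hh : 0 < hhi by lra.
rewrite eval_formula big_ord_recr /= pre_entry // ltnn relu_ge0 // addr0.
rewrite (eq_bigr (fun j : 'I_N => relu (A j - hhi / hlo * \sum_(i < j) A i))); last first.
  move=> j _; rewrite pre_entry // /= ltn_ord (G_shift _ _ _ _ j.+1 N0 hh hb) (G_shift _ _ _ _ j N0 hh hb) !TfE //; last exact: ltnW.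
  rewrite big_ord_recr /=; congr relu; rewrite /Mc; ring.
have [k kN [m Hm]] := @grid_hit R N w xi N0 xiR (le_trans Dwlo w1) (le_lt_trans w2 whi2).
have Hk : A k = h by rewrite /A /u /pbox asboolT //; exists m.
case: (@step_lemma R A h hlo hhi hlo0 h1 h2 hA N) => [[T0 S0]|[Th Sh]].
  have : A k <= \sum_(i < N) A i.
    rewrite (bigD1 (Ordinal kN)) //=.
    have : 0 <= \sum_(i < N | i != Ordinal kN) A i.
      by apply: sumr_ge0 => i _; case: (hA i) => ->; lra.
    lra.
  lra.
by rewrite Sh subrr normr0 ltW.
Qed.
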